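(* Let $n\ge 4$ and for each $k\in\mathbb{N}$ let $w_k$ be the word $01\cdots(n-1)$. Then the sequence of pointed $I_n$-sets $(I_n(w_k))_{k\in\mathbb{N}}$ does not have the Ramsey property.
   Context: $I_n$ is the monoid under composition of all $f\colon\{0,\dots,n-1\}\to\{0,\dots,n-1\}$ with $f(0)=0$ and $f(i-1)\le f(i)\le f(i-1)+1$ for $0<i<n$. For a finite word $w$ over the alphabet $\{0,\dots,n-1\}$ containing the letter $n-1$, and $f\in I_n$, $f(w)$ is the word obtained by applying $f$ letter by letter; $I_n(w)=\{f(w):f\in I_n\}$ with the action $g\cdot f(w)=(g\circ f)(w)$ and distinguished element $w$ is a pointed $I_n$-set. A pointed $M$-set is an $M$-set $X$ with a distinguished point $x$ with $Mx=X$. For a sequence of sets $(X_k)$, $\langle(X_k)\rangle$ is the set of finite sequences $x_1\cdots x_r$ with $x_i\in X_{m_i}$ for some $m_1<\cdots<m_r$, a partial semigroup under concatenation (product defined iff the index sets can be chosen with all indices of the first before all indices of the second); $M$ acts coordinatewise. A sequence $(u_i)$ is basic if $u_{i_1}\cdots u_{i_r}$ is defined for all $i_1<\cdots<i_r$. $(X_k)$ has the Ramsey property if for every finite coloring of $\langle(X_k)\rangle$ there is a basic sequence $(u_i)$ such that each $u_i$ has as an entry the distinguished element of the relevant $X_k$, and all words $a_0(u_{i_0})\cdots a_l(u_{i_l})$ with $i_0<\cdots<i_l$, $a_j\in M$, at least one $a_j=1_M$, have the same color. *)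

(* Defs.v *)
From mathcomp Require Import all_boot.
Set Implicit Arguments. Unset Strict Implicit. Unset Printing Implicit Defensive.

Definition word (n : nat) := seq 'I_n.

Definition inIn (n : nat) (f : 'I_n -> 'I_n) : Prop :=
  (forall i : 'I_n, val i = 0 -> val (f i) = 0) /\
  (forall i j : 'I_n, val j = (val i).+1 ->
       val (f i) <= val (f j) <= (val (f i)).+1).

Definition actw (n : nat) (f : 'I_n -> 'I_n) (w : word n) : word n := map f w.

Definition In_orbit (n : nat) (w : word n) (v : word n) : Prop :=
  exists f, inIn f /\ v = actw f w.

Definition acts (n : nat) (f : 'I_n -> 'I_n) (s : seq (word n)) : seq (word n) :=
  map (actw f) s.

Definition validIdx (n : nat) (X : nat -> word n -> Prop)
    (s : seq (word n)) (ms : seq nat) : Prop :=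
  size ms = size s /\ forall i, i < size s -> X (nth 0 ms i) (nth [::] s i).

(* Membership in <(X_k)>: x_1...x_r (r >= 1) with x_i \in X_(m_i), m_1 < ... < m_r. *)
Definition inProd (n : nat) (X : nat -> word n -> Prop) (s : seq (word n)) : Prop :=
  0 < size s /\ exists ms, sorted ltn ms /\ validIdx X s ms.

(* The iterated partial product s_1 ... s_r is defined: index sets can be
   chosen with all indices of s_j before all indices of s_(j+1). *)
Definition prod_defined (n : nat) (X : nat -> word n -> Prop)
    (ss : seq (seq (word n))) : Prop :=
  (forall j, j < size ss -> 0 < size (nth [::] ss j)) /\
  exists mss : seq (seq nat), size mss = size ss /\
    (forall j, j < size ss -> validIdx X (nth [::] ss j) (nth [::] mss j)) /\
    sorted ltn (flatten mss).

Definition basic (n : nat) (X : nat -> word n -> Prop) (u : nat -> seq (word n)) : Prop :=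
  forall idx : seq nat, idx != [::] -> sorted ltn idx -> prod_defined X (map u idx).

Definition Ramsey (n : nat) (X : nat -> word n -> Prop) (pt : nat -> word n) : Prop :=
  forall (r : nat) (c : seq (word n) -> 'I_r),
  exists u : nat -> seq (word n),
    basic X u /\
    (forall i, exists ms p, sorted ltn ms /\ validIdx X (u i) ms /\
        p < size (u i) /\ nth [::] (u i) p = pt (nth 0 ms p)) /\
    exists col : 'I_r,
      forall (idx : seq nat) (as_ : seq ('I_n -> 'I_n)),
        idx != [::] -> sorted ltn idx -> size as_ = size idx ->
        (forall j, j < size as_ -> inIn (nth id as_ j)) ->
        (exists j, j < size as_ /\ forall x, nth id as_ j x = x) ->
        c (flatten [seq acts a v | '(a, v) <- zip as_ (map u idx)]) = col.

Definition wfull (n : nat) : word n := enum 'I_n.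

(* Main.v *)
Require Import Defs.
From mathcomp Require Import all_boot.
From mathcomp Require Import zify.

Definition P2 {n} (w : word n) : bool := has (fun v : 'I_n => 1 < val v) w.
Definition Q3 {n} (w : word n) : bool := has (fun v : 'I_n => 2 < val v) w.
Definition col_of {n} (x : seq (word n)) : 'I_n.+1 :=
  inord (find (fun v : 'I_n => val v == 1) (last [::] (filter P2 x))).

Lemma last_filter_cat n (s t : seq (word n)) : has P2 t ->
  last [::] (filter P2 (s ++ t)) = last [::] (filter P2 t).
Proof.
rewrite has_filter filter_cat last_cat.
by case: (filter P2 t).
Qed.

Lemma key n (bb : 'I_n -> 'I_n) (u1 : seq (word n)) :
  (forall v, (1 < val (bb v)) = (2 < val v)) -> has Q3 u1 ->
  has P2 (acts bb u1) /\
  last [::] (filter P2 (acts bb u1)) = actw bb (last [::] (filter Q3 u1)).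
Proof.
move=> hb hq.
have eP : preim (actw bb) P2 =1 Q3.
  by move=> w; rewrite /= /P2 /Q3 /actw has_map; apply: eq_has => v /=; rewrite hb.
split; first by rewrite /acts has_map (eq_has eP).
rewrite /acts filter_map (eq_filter eP).
by rewrite -[X in last X _]/(actw bb [::]) last_map.
Qed.

Lemma valE k (x : 'I_k) : val x = nat_of_ord x.
Proof. by []. Qed.

Theorem corollary4p7 (n : nat) : 4 <= n ->
  ~ Ramsey (fun _ : nat => In_orbit (wfull n)) (fun _ : nat => wfull n).
Proof.
case: n => [|[|[|[|m]]]] // _.
move=> /(_ (m.+4.+1) (@col_of (m.+4))) [u [_ [Hpt [col H]]]].
pose b : 'I_m.+4 -> 'I_m.+4 := fun v => inord (if val v <= 2 then minn v 1 else (val v).-1).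
pose b' : 'I_m.+4 -> 'I_m.+4 := fun v => inord ((val v).-1).
have vb : forall v, val (b v) = (if val v <= 2 then minn v 1 else (val v).-1).
  move=> v; rewrite /b /= inordK //; have := ltn_ord v; case: ifP; lia.
have vb' : forall v, val (b' v) = (val v).-1.
  move=> v; rewrite /b' /= inordK //; have := ltn_ord v; lia.
have Ib : inIn b.
  split=> [i|i j] /=; rewrite !vb /=; first by move=> ->.
  move=> ->; case: ifP; case: ifP; lia.
have Ib' : inIn b'.
  by split=> [i|i j] /=; rewrite !vb' /=; [move=> -> | move=> ->; lia].
have Iid : inIn (@id 'I_m.+4) by split=> //= i j ->; lia.
have E : forall bb, inIn bb ->
    col_of (acts id (u 0) ++ acts bb (u 1)) = col.
  move=> bb Ibb.
  have := H [:: 0; 1] [:: id; bb] erefl erefl erefl _ _.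
  rewrite /= cats0; apply.
  - by case=> [|[|j]].
  - by exists 0.
have hq : has Q3 (u 1).
  have [ms [p [_ [[_ Hv] [Hp Hnth]]]]] := Hpt 1.
  apply/hasP; exists (nth [::] (u 1) p); first exact: mem_nth.
  rewrite Hnth /Q3 /wfull; apply/hasP; exists (inord 3); first by rewrite mem_enum.
  by rewrite /= inordK.
have hb : forall v, (1 < val (b v)) = (2 < val v).
  by move=> v; rewrite vb; have := ltn_ord v; case: ifP; lia.
have hb' : forall v, (1 < val (b' v)) = (2 < val v).
  by move=> v; rewrite vb'; have := ltn_ord v; lia.
have [hP1 L1] := key _ _ _ hb hq.
have [hP2 L2] := key _ _ _ hb' hq.
have E1 := E b Ib; have E2 := E b' Ib'.
rewrite /col_of last_filter_cat // L1 in E1.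
rewrite /col_of last_filter_cat // L2 in E2.
set Z := last [::] (filter Q3 (u 1)) in E1 E2.
have : Z \in filter Q3 (u 1).
  move: hq; rewrite has_filter /Z; case: (filter Q3 (u 1)) => // y t _.
  by rewrite /= mem_last.
rewrite mem_filter => /andP [QZ Zu].
have [ms [p [_ [[_ Hv] _]]]] := Hpt 1.
have := Hv (index Z (u 1)); rewrite index_mem nth_index // => /(_ Zu) [f [If EZ]].
have sz : forall bb, size (actw bb Z) = m.+4.
  by move=> bb; rewrite /actw size_map EZ /actw size_map size_enum_ord.
have ej := congr1 val (etrans E1 (esym E2)).
rewrite /= !inordK ?ltnS ?(leq_trans (find_size _ _)) ?sz // in ej.
have {}ej : find (fun v => val (b (f v)) == 1) (enum 'I_m.+4) =
    find (fun v => val (b' (f v)) == 1) (enum 'I_m.+4).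
  by move: ej; rewrite EZ /actw -!map_comp !find_map.
have nthE : forall i, i < m.+4 -> nth ord0 (enum 'I_m.+4) i = inord i.
  by move=> i hi; apply: val_inj; rewrite /= nth_enum_ord // inordK.
have claim : forall i, i < find ((fun v => val (b (f v)) == 1)) (enum 'I_m.+4) ->
    i < m.+4 -> val (f (inord i)) = 0.
  elim=> [|i IH] hi hn.
    by apply: (proj1 If); rewrite /= inordK.
  have h0 := IH (ltnW hi) (ltnW hn).
  have := proj2 If (inord i) (inord i.+1); rewrite /= !inordK //; last by lia.
  move=> /(_ erefl); rewrite h0 => /andP [_ hle].
  have := before_find ord0 hi; rewrite nthE //= vb.
  rewrite ?valE in h0 hle *; by case: ifP; lia.
case: (ltnP (find ((fun v => val (b' (f v)) == 1)) (enum 'I_m.+4)) m.+4) => hj.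
  have := @nth_find _ ord0 ((fun v => val (b' (f v)) == 1)) (enum 'I_m.+4).
  rewrite has_find size_enum_ord => /(_ hj); rewrite nthE //= vb'.
  rewrite -ej in hj *.
  case E0: (find _ _) hj => [|k] hj.
    by rewrite (proj1 If (inord 0)) //= inordK.
  have hk : k < find ((fun v => val (b (f v)) == 1)) (enum 'I_m.+4) by rewrite E0.
  have h0 := claim k hk (ltnW hj).
  have := proj2 If (inord k) (inord k.+1); rewrite /= !inordK //; last by lia.
  move=> /(_ erefl); rewrite h0 => /andP [_ hle].
  rewrite ?valE in hle *; lia.
move: QZ; rewrite /Q3 EZ /actw has_map => /hasP [x _ /= hx].
have := claim x; rewrite inord_val ej => /(_ (leq_trans (ltn_ord x) hj) (ltn_ord x)).
rewrite ?valE in hx *; lia.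
Qed.
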